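(* For every approval-based multi-winner election $\sigma=\langle\mathcal V,\mathcal C,S,B\rangle$, every non-empty $\mathcal A\subseteq\mathcal C$ and every $F\in\mathfrak F^{\mathrm{opt}}_{\sigma,\mathcal A}$, there exists a non-empty $\mathcal K\subseteq\mathcal A$ with the following two properties: 1. $\mathrm{Supp}_F(c)=\mathrm{maxMin}(\sigma,\mathcal A)$ for every $c\in\mathcal K$; 2. $F(y,c)=0$ for every $c\in\mathcal A\setminus\mathcal K$ and every $y\in2^{\mathcal C}$ with $y\cap\mathcal K\neq\emptyset$.
   Context: An approval-based multi-winner election is a tuple $\sigma=\langle \mathcal V,\mathcal C,S,B\rangle$, where $\mathcal V$ is a finite set of agents, $\mathcal C$ is a finite set of candidates, $1\le S\le|\mathcal C|$ is an integer, and $B:2^{\mathcal C}\to\mathbb N$ gives, for each $\mathcal A\subseteq\mathcal C$, the number $B(\mathcal A)$ of agents whose ballot is exactly $\mathcal A$ (with $\sum_{\mathcal A}B(\mathcal A)\le|\mathcal V|$). For a non-empty $\mathcal A\subseteq\mathcal C$, the family $\mathfrak F_{\sigma,\mathcal A}$ is the set of all $F:2^{\mathcal C}\times\mathcal A\to\mathbb R$ such that: - $F(y,c)\ge0$ for all $y$ and $c$; - $F(y,c)=0$ if $c\notin y$; - $\sum_{c\in\mathcal A\cap y}F(y,c)=B(y)$ whenever $y\cap\mathcal A\neq\emptyset$. We write $\mathrm{Supp}_F(c)=\sum_yF(y,c)$ and $\mathrm{maxMin}(\sigma,\mathcal A)=\sup_{F\in\mathfrak F_{\sigma,\mathcal A}}\min_{c\in\mathcal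 A}\mathrm{Supp}_F(c)$. We also write $\mathfrak F^{\mathrm{opt}}_{\sigma,\mathcal A}=\{F\in\mathfrak F_{\sigma,\mathcal A}:\mathrm{Supp}_F(c)\ge\mathrm{maxMin}(\sigma,\mathcal A)\ \forall c\in\mathcal A\}$. *)

(* Defs.v *)
From HB Require Import structures.
From mathcomp Require Import all_boot all_order all_algebra.
Set Implicit Arguments. Unset Strict Implicit. Unset Printing Implicit Defensive.
Import Order.TTheory GRing.Theory Num.Theory.
Local Open Scope ring_scope.

Definition election (V C : finType) (S : nat) (B : {set C} -> nat) : Prop :=
  (1 <= S <= #|C|)%N /\ (\sum_(Y : {set C}) B Y <= #|V|)%N.

(* F : 2^C x A -> R is represented by a total function {set C} -> C -> R;
   only its values at c \in A are meaningful. *)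
Definition in_family (R : realFieldType) (C : finType) (B : {set C} -> nat)
  (A : {set C}) (F : {set C} -> C -> R) : Prop :=
  (forall (y : {set C}) c, c \in A -> 0 <= F y c) /\
  (forall (y : {set C}) c, c \in A -> c \notin y -> F y c = 0) /\
  (forall y : {set C}, y :&: A != set0 -> \sum_(c in A :&: y) F y c = (B y)%:R).

Definition Supp (R : realFieldType) (C : finType) (F : {set C} -> C -> R) (c : C) : R :=
  \sum_(y : {set C}) F y c.

Definition is_minSupp (R : realFieldType) (C : finType) (A : {set C})
  (F : {set C} -> C -> R) (v : R) : Prop :=
  (exists2 c, c \in A & Supp F c = v) /\ (forall c, c \in A -> v <= Supp F c).

Definition is_maxMin (R : realFieldType) (C : finType) (B : {set C} -> nat)
  (A : {set C}) (m : R) : Prop :=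
  let vals := fun v => exists F, in_family B A F /\ is_minSupp A F v in
  (forall v, vals v -> v <= m) /\
  (forall u, (forall v, vals v -> v <= u) -> m <= u).

Definition in_opt_family (R : realFieldType) (C : finType) (B : {set C} -> nat)
  (A : {set C}) (m : R) (F : {set C} -> C -> R) : Prop :=
  in_family B A F /\ (forall c, c \in A -> m <= Supp F c).

(* Main.v *)
Require Import Defs.
From HB Require Import structures.
From mathcomp Require Import all_boot all_order all_algebra.
From mathcomp Require Import lra.
Import Order.TTheory GRing.Theory Num.Theory.
Local Open Scope ring_scope.

Section L3.
Variables (R : realFieldType) (C : finType) (B : {set C} -> nat) (A : {set C})
  (m : R) (F : {set C} -> C -> R).

Lemma Supp_upd (G H : {set C} -> C -> R) (y : {set C}) e :
  (forall z, z != y -> G z e = H z e) -> Supp G e = Supp H e + (G y e - H y e).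
Proof.
move=> hz; rewrite /Supp (bigD1 y) //= [in RHS](bigD1 y) //=.
rewrite (eq_bigr (fun z => H z e)); last by move=> z /hz ->.
set s := \sum_(i | _) _; lra.
Qed.

Lemma sum_upd (S : {set C}) (g h : C -> R) c d eps :
  c \in S -> d \in S -> c != d -> g c = h c - eps -> g d = h d + eps ->
  (forall e, e != c -> e != d -> g e = h e) ->
  \sum_(e in S) g e = \sum_(e in S) h e.
Proof.
move=> cS dS cd gc gd ge.
rewrite (bigD1 c) // [RHS](bigD1 c) //= (bigD1 d) /=; last by rewrite dS eq_sym.
rewrite [in RHS](bigD1 d) /=; last by rewrite dS eq_sym.
rewrite (eq_bigr (fun e => h e)); last by move=> e /andP[/andP[_ ?] ?]; apply: ge.
set s := \sum_(i | _) _; rewrite gc gd; lra.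
Qed.

Definition Pinv (X : {set C}) (G : {set C} -> C -> R) :=
  [/\ X \subset A, (forall e, e \in A -> m < Supp F e -> e \in X),
      in_family B A G, ((forall e, e \in A -> m <= Supp G e) /\ 
      (forall e, e \in X -> m < Supp G e)) &
      (forall z e, e \in A -> F z e != 0 -> 0 < G z e)].

Lemma step X G c (y : {set C}) d :
  Pinv X G -> c \in X -> d \in A -> d \notin X -> d \in y -> 0 < G y c ->
  exists G', Pinv (d |: X) G'.
Proof.
move=> [XA DX [G0 [Gz Gs]] [GA GX] GF] cX dA dX dy Gyc.
have cA : c \in A by apply: (subsetP XA).
have cy : c \in y.
  by apply/negPn/negP => /(Gz _ _ cA) e; rewrite e ltxx in Gyc.
have cd : c != d by apply: contraNneq dX => <-.
have sc := GX c cX.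
pose eps := Num.min (G y c / 2) ((Supp G c - m) / 2).
have e0 : 0 < eps by rewrite lt_min !divr_gt0 // subr_gt0.
have e1' : eps <= G y c / 2 by rewrite ge_min lexx.
have e2' : eps <= (Supp G c - m) / 2 by rewrite ge_min lexx orbT.
have e1 : eps < G y c by lra.
have e2 : eps < Supp G c - m by lra.
pose G' := fun z e => if z == y then (if e == c then G z e - eps
             else if e == d then G z e + eps else G z e) else G z e.
have Gyo : forall z e, z != y -> G' z e = G z e.
  by move=> z e /negbTE zy; rewrite /G' zy.
have SG e : Supp G' e = Supp G e + (G' y e - G y e).
  by apply: Supp_upd => z; apply: Gyo.
have dc : (d == c) = false by apply/negbTE; rewrite eq_sym.
exists G'; split; [| | |split|].
- by apply/subsetP => e; rewrite in_setU1 => /orP[/eqP->//|/(subsetP XA)].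
- by move=> e eA /(DX _ eA) eX; rewrite in_setU1 eX orbT.
- split; [|split].
  + move=> z e eA; rewrite /G'; case: eqP => [zy|_]; last exact: G0.
    subst z; case: eqP => [->|_]; first lra.
    case: eqP => [->|_]; last exact: G0.
    have := G0 y d dA; lra.
  + move=> z e eA ez; rewrite /G'; case: eqP => [zy|_]; last exact: Gz.
    subst z; have -> : (e == c) = false by apply/negbTE; apply: contraNneq ez => ->.
    have -> : (e == d) = false by apply/negbTE; apply: contraNneq ez => ->.
    exact: Gz.
  + move=> z zA; case: (eqVneq z y) => [->|zy]; last first.
      by rewrite -(Gs z zA); apply: eq_bigr => e _; apply: Gyo.
    rewrite -(Gs y); last by apply/set0Pn; exists c; rewrite !inE cA cy.
    apply: (@sum_upd _ _ _ c d eps); rewrite ?inE ?cA ?cy ?dA ?dy //.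
    * by rewrite /G' !eqxx.
    * by rewrite /G' eqxx dc eqxx.
    * by move=> e /negbTE ec /negbTE ed; rewrite /G' eqxx ec ed.
- move=> e eA; rewrite SG /G' eqxx; case: eqP => [->|_]; first lra.
  case: eqP => [->|_]; first by have := GA d dA; lra.
  by have := GA e eA; lra.
- move=> e; rewrite in_setU1 => eX; rewrite SG /G' eqxx; case: eqP => [->|ec]; first lra.
  case: eqP => [->|ed]; first by have := GA d dA; lra.
  by rewrite addrN addr0; apply: GX; case/orP: eX => // /eqP.
- move=> z e eA Fz; rewrite /G'; case: eqP => [zy|_]; last exact: GF.
  subst z; have h := GF y e eA Fz; case: eqP => [ec|_]; first by subst e; lra.
  by case: eqP => [ed|_] //; lra.
Qed.

Lemma main n X G : A != set0 -> is_maxMin B A m ->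
  (forall c, c \in A -> m <= Supp F c) ->
  (#|A :\: X| < n)%N -> Pinv X G ->
  exists K : {set C},
    [/\ K != set0, K \subset A,
        (forall c, c \in K -> Supp F c = m) &
        (forall c (y : {set C}), c \in A :\: K -> y :&: K != set0 -> F y c = 0)].
Proof.
move=> A0 hm hF; elim: n X G => // n IH X G lt [XA DX Gfam [GA GX] GF].
case: (boolP [exists c in X, exists y : {set C}, exists d in A :\: X,
                (d \in y) && (F y c != 0)]).
- case/exists_inP => c cX /existsP [y /exists_inP [d dAX /andP [dy Fyc]]].
  move: (dAX); rewrite inE => /andP[dX dA].
  have cA : c \in A by apply: (subsetP XA).
  have Gyc : 0 < G y c := GF y c cA Fyc.
  have [G' P'] := @step X G c y d (And5 XA DX Gfam (conj GA GX) GF) cX dA dX dy Gyc.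
  apply: (IH _ G'); last exact: P'.
  have : A :\: (d |: X) \proper A :\: X.
    apply/properP; split; last by exists d => //; rewrite !inE eqxx.
    by apply/subsetP => e; rewrite !inE => /andP[/norP[_ ->] ->].
  by move/proper_card => h; rewrite ltnS in lt; exact: leq_trans h lt.
- move=> nb; exists (A :\: X); split.
  + apply/negP => /eqP e0.
    have AX : forall e, e \in A -> e \in X.
      move=> e eA; apply/negPn/negP => eX.
      have : e \in A :\: X by rewrite inE eX eA.
      by rewrite e0 inE.
    case/set0Pn: A0 => c0 c0A.
    case: (@arg_minP _ R C c0 (mem A) (Supp G) c0A) => c1 c1A c1min.
    have : Supp G c1 <= m.
      apply: hm.1; exists G; split => //; split; first by exists c1.
      exact: c1min.
    have := GX c1 (AX c1 c1A); lra.
  + exact: subsetDl.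
  + move=> c; rewrite inE => /andP[cX cA]; apply/eqP; rewrite eq_le hF // andbT.
    by rewrite leNgt; apply/negP => /(DX c cA); rewrite (negbTE cX).
  + move=> c y; rewrite !inE negb_and negbK => /andP[cX' cA].
    have cX : c \in X by move: cX'; rewrite cA orbF.
    case/set0Pn => d; rewrite !inE => /andP[dy /andP[dX dA]].
    apply/eqP; move: nb; apply: contraNT => Fyc.
    apply/exists_inP; exists c => //.
    apply/existsP; exists y; apply/exists_inP; exists d; first by rewrite inE dX dA.
    by rewrite dy Fyc.
Qed.
End L3.

Theorem lemma3 (R : realFieldType) (V C : finType) (S : nat)
  (B : {set C} -> nat) (A : {set C}) (m : R) (F : {set C} -> C -> R) :
  election V S B ->
  A != set0 -> is_maxMin B A m -> in_opt_family B A m F ->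
  exists K : {set C},
    [/\ K != set0, K \subset A,
        (forall c, c \in K -> Supp F c = m) &
        (forall c (y : {set C}), c \in A :\: K -> y :&: K != set0 -> F y c = 0)].
Proof.
move=> _ A0 hm [Ff hF].
apply: (@main R C B A m F (#|A :\: [set e in A | m < Supp F e]|).+1
          [set e in A | m < Supp F e] F) => //.
split => //.
- by apply/subsetP => e; rewrite inE => /andP[].
- by move=> e eA me; rewrite inE eA me.
- by split => // e; rewrite inE => /andP[].
- by move=> z e eA Fz; rewrite lt_def Fz; apply: Ff.1.
Qed.
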